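(* Consider the polyhedron $\mathcal{F}$ of all $(y,x)\geq0$ satisfying the production, inventory and capacity constraints described in the context, where $u^{\mathrm{REC}}>0$ and $u^{\mathrm{CP}}>0$. Let $(\tilde{y},\tilde{x})$ be an extreme point of $\mathcal{F}$. Then for all $j\in\mathcal{J},l\in\mathcal{L},z\in\mathcal{Z}$, writing $Y_{z,l,j}=\sum_{n\in\mathcal{N}^{\mathrm{REC}}_l}\tilde{y}^{\mathrm{REC}}_{z,l,j,n}$, $$\#\{n\in\mathcal{N}^{\mathrm{REC}}_l:\tilde{y}^{\mathrm{REC}}_{z,l,j,n}=u^{\mathrm{REC}}\}\geq\Big\lceil\tfrac{Y_{z,l,j}}{u^{\mathrm{REC}}}\Big\rceil-1,\qquad \#\{n\in\mathcal{N}^{\mathrm{REC}}_l:\tilde{y}^{\mathrm{REC}}_{z,l,j,n}=0\}\geq|\mathcal{N}^{\mathrm{REC}}_l|-\Big\lceil\tfrac{Y_{z,l,j}}{u^{\mathrm{REC}}}\Big\rceil,$$ and for all $k\in\mathcal{K}^{\mathrm{CP}},l\in\mathcal{L},z\in\mathcal{Z}$, writing $Y_{z,l,k}=\sum_{n\in\mathcal{N}^{\mathrm{CP}}_{l,k}}\tilde{y}^{\mathrm{CP}}_{z,l,k,n}$, $$\#\{n\in\mathcal{N}^{\mathrm{CP}}_{l,k}:\tilde{y}^{\mathrm{CP}}_{z,l,k,n}=u^{\mathrm{CP}}\}\geq\Big\lceil\tfrac{Y_{z,l,k}}{u^{\mathrm{CP}}}\Big\rceil-1,\qquad \#\{n\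in\mathcal{N}^{\mathrm{CP}}_{l,k}:\tilde{y}^{\mathrm{CP}}_{z,l,k,n}=0\}\geq|\mathcal{N}^{\mathrm{CP}}_{l,k}|-\Big\lceil\tfrac{Y_{z,l,k}}{u^{\mathrm{CP}}}\Big\rceil.$$
   Context: Index sets (all finite): chemistries $\mathcal{I}$; recycling processes $\mathcal{J}$; materials $\mathcal{K}$ with cathode powders $\mathcal{K}^{\mathrm{CP}}\subseteq\mathcal{K}$; zones $\mathcal{Z}$; periods $\mathcal{T}=\{1,\dots,T\}$; planning periods $\mathcal{L}=\{1,\dots,L\}$ with $\{\mathcal{T}_l\}$ a partition of $\mathcal{T}$; stages with $\sigma_t$ the stage of $t\in\mathcal{T}\cup\{0\}$; finite nonempty node sets $\Omega_\sigma$; ancestor maps $a_\omega(t)\in\Omega_{\sigma_t}$ with $a_\omega(t)=\omega$ if $\omega\in\Omega_{\sigma_t}$; positive integers $N^{\mathrm{REC}}_l,N^{\mathrm{CP}}_{l,k}$ with $\mathcal{N}^{\mathrm{REC}}_l=\{1,\dots,N^{\mathrm{REC}}_l\}$, $\mathcal{N}^{\mathrm{CP}}_{l,k}=\{1,\dots,N^{\mathrm{CP}}_{l,k}\}$. Data: coefficients $\Delta^{\mathrm{NB}}_{i,k},\Delta^{\mathrm{CP}}_{k',k},\Delta^{\mathrm{MC}}_{k',k},\Delta^{\mathrm{REC}}_{k,i,j}$, demands $d_{\omega,z,t,i}$, supplies $s_{\omega,z,t,i}$, capacities $u^{\mathrm{REC}},u^{\mathrm{CP}}$. Variables (nonnegative),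 for $t\in\mathcal{T},z\in\mathcal{Z},\omega\in\Omega_{\sigma_t}$ (inventories also at $t=0$): $x^{\mathrm{NM,NB}}_{\omega,z,t,k},x^{\mathrm{RM,INV}}_{\omega,z,t,k},x^{\mathrm{RM,S}}_{\omega,z,t,k},x^{\mathrm{INV}}_{\omega,z,t,k}$ ($k\in\mathcal{K}$); $x^{\mathrm{INV,NB}},x^{\mathrm{CP,INV}}$ ($k\in\mathcal{K}^{\mathrm{CP}}$); $x^{\mathrm{NM,CP}},x^{\mathrm{MC,CP}},x^{\mathrm{INV,MC}}$ ($k\notin\mathcal{K}^{\mathrm{CP}}$); $x^{\mathrm{RB}}_{\omega,z,t,i}$; $x^{\mathrm{RB,RM}}_{\omega,z,t,i,j}$; $x^{\mathrm{TR,RM}}_{\omega,z,z',t,k},x^{\mathrm{TR,RB}}_{\omega,z,z',t,i}$ ($z'\neq z$); $y^{\mathrm{REC}}_{z,l,j,n}$ ($n\in\mathcal{N}^{\mathrm{REC}}_l$), $y^{\mathrm{CP}}_{z,l,k,n}$ ($k\in\mathcal{K}^{\mathrm{CP}},n\in\mathcal{N}^{\mathrm{CP}}_{l,k}$). Production constraints, for all $t\in\mathcal{T},z,\omega\in\Omega_{\sigma_t}$: $\sum_i\Delta^{\mathrm{NB}}_{i,k}d_{\omega,z,t,i}=x^{\mathrm{NM,NB}}_{\omega,z,t,k}+x^{\mathrm{INV,NB}}_{\omega,z,t,k}$ ($k\in\mathcal{K}^{\mathrm{CP}}$); $\sum_i\Delta^{\mathrm{NB}}_{i,k}d_{\omega,z,t,i}=x^{\mathrm{NM,NB}}_{\omega,z,t,k}$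 ($k\notin\mathcal{K}^{\mathrm{CP}}$); $\sum_{k'\in\mathcal{K}^{\mathrm{CP}}}\Delta^{\mathrm{CP}}_{k',k}x^{\mathrm{CP,INV}}_{\omega,z,t,k'}=x^{\mathrm{NM,CP}}_{\omega,z,t,k}+x^{\mathrm{MC,CP}}_{\omega,z,t,k}$ ($k\notin\mathcal{K}^{\mathrm{CP}}$); $\sum_{k'\notin\mathcal{K}^{\mathrm{CP}}}\Delta^{\mathrm{MC}}_{k',k}x^{\mathrm{MC,CP}}_{\omega,z,t,k'}=x^{\mathrm{INV,MC}}_{\omega,z,t,k}$ ($k\notin\mathcal{K}^{\mathrm{CP}}$); $x^{\mathrm{RM,INV}}_{\omega,z,t,k}+x^{\mathrm{RM,S}}_{\omega,z,t,k}=\sum_{i,j}\Delta^{\mathrm{REC}}_{k,i,j}x^{\mathrm{RB,RM}}_{\omega,z,t,i,j}$. Inventory constraints: $x^{\mathrm{RB}}_{\omega,z,0,i}=0$, $x^{\mathrm{INV}}_{\omega,z,0,k}=0$ for $\omega\in\Omega_{\sigma_0}$; for $t\in\mathcal{T}$ and $\omega'=a_\omega(t-1)$: $x^{\mathrm{RB}}_{\omega,z,t,i}=x^{\mathrm{RB}}_{\omega',z,t-1,i}+\sum_{z'\neq z}(x^{\mathrm{TR,RB}}_{\omega,z',z,t,i}-x^{\mathrm{TR,RB}}_{\omega,z,z',t,i})+s_{\omega,z,t,i}-\sum_jx^{\mathrm{RB,RM}}_{\omega,z,t,i,j}$; for $k\notin\mathcal{K}^{\mathrm{CP}}$: $x^{\mathrm{INV}}_{\omega,z,t,k}=x^{\mathrm{INV}}_{\omega',z,t-1,k}+\sum_{z'\neq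 z}(x^{\mathrm{TR,RM}}_{\omega,z',z,t,k}-x^{\mathrm{TR,RM}}_{\omega,z,z',t,k})+x^{\mathrm{RM,INV}}_{\omega,z,t,k}-x^{\mathrm{INV,MC}}_{\omega,z,t,k}$; for $k\in\mathcal{K}^{\mathrm{CP}}$: the same right-hand side but with $-x^{\mathrm{INV,MC}}_{\omega,z,t,k}$ replaced by $+x^{\mathrm{CP,INV}}_{\omega,z,t,k}-x^{\mathrm{INV,NB}}_{\omega,z,t,k}$. Capacity constraints: $\sum_{n\in\mathcal{N}^{\mathrm{REC}}_l}y^{\mathrm{REC}}_{z,l,j,n}\geq\sum_ix^{\mathrm{RB,RM}}_{\omega,z,t,i,j}$ and $\sum_{n\in\mathcal{N}^{\mathrm{CP}}_{l,k}}y^{\mathrm{CP}}_{z,l,k,n}\geq x^{\mathrm{CP,INV}}_{\omega,z,t,k}$ for all $t\in\mathcal{T}_l,\omega\in\Omega_{\sigma_t}$; the total capacities $\sum_ny^{\mathrm{REC}}_{z,l,j,n}$ and $\sum_ny^{\mathrm{CP}}_{z,l,k,n}$ are nondecreasing from $l-1$ to $l$ for $l\geq2$; $y^{\mathrm{REC}}_{z,l,j,n}\leq u^{\mathrm{REC}}$ and $y^{\mathrm{CP}}_{z,l,k,n}\leq u^{\mathrm{CP}}$. *)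

(* Defs.v *)
From HB Require Import structures.
From mathcomp Require Import all_boot all_order all_algebra.
From mathcomp Require Import reals.
Unset Implicit Arguments. Unset Strict Implicit. Unset Printing Implicit Defensive.
Import Order.TTheory GRing.Theory Num.Theory.
Local Open Scope ring_scope.

(* Time: the periods 0,1,...,T are 'I_T.+1.  The "real" periods T = {1..T}
   are represented by t : 'I_T, standing for period t+1 = tnext t; its
   predecessor period t is tprev t. *)
Definition tnext {T : nat} (t : 'I_T) : 'I_T.+1 := lift ord0 t.
Definition tprev {T : nat} (t : 'I_T) : 'I_T.+1 := widen_ord (leqnSn T) t.

Unset Implicit Arguments.
Record model (R : realType) := Model {
  chem : finType;
  proc : finType;
  mat : finType;
  KCP : {set mat};
  zone : finType;
  nT : nat;
  nL : nat;
  stage : finType;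
  sigma : 'I_nT.+1 -> stage;
  node : stage -> finType;
  node_nonempty : forall s, (0 < #|node s|)%N;
  anc : forall t : 'I_nT, node (sigma (tnext t)) -> node (sigma (tprev t));
        (* anc t w = a_w(t-1) for w in Omega_{sigma_t}, t = tnext t *)
  anc_id : forall (t : 'I_nT) (e : sigma (tnext t) = sigma (tprev t))
             (w : node (sigma (tnext t))), anc t w = ecast s (node s) e w;
  lof : 'I_nT -> 'I_nL;                   (* t \in T_(lof t): the partition *)
  lof_surj : forall l : 'I_nL, exists t, lof t = l;
  NREC : 'I_nL -> nat;
  NREC_pos : forall l, (0 < NREC l)%N;
  NCP : 'I_nL -> mat -> nat;
  NCP_pos : forall l k, (0 < NCP l k)%N;
  DNB : chem -> mat -> R;
  DCP : mat -> mat -> R;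
  DMC : mat -> mat -> R;
  DREC : mat -> chem -> proc -> R;
  dem : forall t : 'I_nT, node (sigma (tnext t)) -> zone -> chem -> R;
  sup : forall t : 'I_nT, node (sigma (tnext t)) -> zone -> chem -> R;
  uREC : R;
  uCP : R
}.
Arguments chem {R} m.
Arguments proc {R} m.
Arguments mat {R} m.
Arguments KCP {R} m.
Arguments zone {R} m.
Arguments nT {R} m.
Arguments nL {R} m.
Arguments stage {R} m.
Arguments sigma {R} m.
Arguments node {R} m.
Arguments node_nonempty {R} m.
Arguments anc {R} m.
Arguments anc_id {R} m.
Arguments lof {R} m.
Arguments lof_surj {R} m.
Arguments NREC {R} m.
Arguments NREC_pos {R} m.
Arguments NCP {R} m.
Arguments NCP_pos {R} m.
Arguments DNB {R} m.
Arguments DCP {R} m.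
Arguments DMC {R} m.
Arguments DREC {R} m.
Arguments dem {R} m.
Arguments sup {R} m.
Arguments uREC {R} m.
Arguments uCP {R} m.
Set Implicit Arguments.

Section Vars.
Variables (R : realType) (M : model R).

Definition cpmat := {k : mat M | k \in KCP M}.
Definition ncpmat := {k : mat M | k \notin KCP M}.
Definition zpair := {p : zone M * zone M | p.1 != p.2}.
Definition nd (t : 'I_(nT M)) := node M (sigma M (tnext t)).

Inductive var : Type :=
| NMNB (t : 'I_(nT M)) (w : nd t) (z : zone M) (k : mat M)
| RMINV (t : 'I_(nT M)) (w : nd t) (z : zone M) (k : mat M)
| RMS (t : 'I_(nT M)) (w : nd t) (z : zone M) (k : mat M)
| INV (t : 'I_(nT M).+1) (w : node M (sigma M t)) (z : zone M) (k : mat M)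
| INVNB (t : 'I_(nT M)) (w : nd t) (z : zone M) (k : cpmat)
| CPINV (t : 'I_(nT M)) (w : nd t) (z : zone M) (k : cpmat)
| NMCP (t : 'I_(nT M)) (w : nd t) (z : zone M) (k : ncpmat)
| MCCP (t : 'I_(nT M)) (w : nd t) (z : zone M) (k : ncpmat)
| INVMC (t : 'I_(nT M)) (w : nd t) (z : zone M) (k : ncpmat)
| RB (t : 'I_(nT M).+1) (w : node M (sigma M t)) (z : zone M) (i : chem M)
| RBRM (t : 'I_(nT M)) (w : nd t) (z : zone M) (i : chem M) (j : proc M)
| TRRM (t : 'I_(nT M)) (w : nd t) (p : zpair) (k : mat M)
        (* p = (z, z'): transport from z to z' *)
| TRRB (t : 'I_(nT M)) (w : nd t) (p : zpair) (i : chem M)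
| YREC (z : zone M) (l : 'I_(nL M)) (j : proc M) (n : 'I_(NREC M l))
| YCP (z : zone M) (l : 'I_(nL M)) (k : cpmat) (n : 'I_(NCP M l (val k))).

Arguments NMNB : clear implicits.
Arguments RMINV : clear implicits.
Arguments RMS : clear implicits.
Arguments INV : clear implicits.
Arguments INVNB : clear implicits.
Arguments CPINV : clear implicits.
Arguments NMCP : clear implicits.
Arguments MCCP : clear implicits.
Arguments INVMC : clear implicits.
Arguments RB : clear implicits.
Arguments RBRM : clear implicits.
Arguments TRRM : clear implicits.
Arguments TRRB : clear implicits.
Arguments YREC : clear implicits.
Arguments YCP : clear implicits.

Definition point := var -> R.

Definition capREC (x : point) z l j : R := \sum_(n < NREC M l) x (YREC z l j n).
Definition capCP (x : point) z l (k : cpmat) : R :=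
  \sum_(n < NCP M l (val k)) x (YCP z l k n).

Definition netRB (x : point) t (w : nd t) z i : R :=
  \sum_(p : zpair | (val p).2 == z) x (TRRB t w p i)
  - \sum_(p : zpair | (val p).1 == z) x (TRRB t w p i).
Definition netRM (x : point) t (w : nd t) z k : R :=
  \sum_(p : zpair | (val p).2 == z) x (TRRM t w p k)
  - \sum_(p : zpair | (val p).1 == z) x (TRRM t w p k).

Arguments netRB : clear implicits.
Arguments netRM : clear implicits.

Definition production (x : point) : Prop :=
  forall (t : 'I_(nT M)) (z : zone M) (w : nd t),
  [/\ forall k : cpmat,
        \sum_i DNB M i (val k) * dem M t w z i = x (NMNB t w z (val k)) + x (INVNB t w z k),
      forall k : ncpmat,
        \sum_i DNB M i (val k) * dem M t w z i = x (NMNB t w z (val k)),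
      forall k : ncpmat,
        \sum_(k' : cpmat) DCP M (val k') (val k) * x (CPINV t w z k')
          = x (NMCP t w z k) + x (MCCP t w z k),
      forall k : ncpmat,
        \sum_(k' : ncpmat) DMC M (val k') (val k) * x (MCCP t w z k')
          = x (INVMC t w z k)
    & forall k : mat M,
        x (RMINV t w z k) + x (RMS t w z k)
          = \sum_i \sum_j DREC M k i j * x (RBRM t w z i j)].

Definition inventory (x : point) : Prop :=
  (forall (w : node M (sigma M ord0)) (z : zone M),
      (forall i, x (RB ord0 w z i) = 0) /\ (forall k, x (INV ord0 w z k) = 0)) /\
  (forall (t : 'I_(nT M)) (z : zone M) (w : nd t),
   let w' := anc M t w in
   [/\ forall i : chem M,
         x (RB (tnext t) w z i) = x (RB (tprev t) w' z i) + netRB x t w z i + sup M t w z i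
                        - \sum_j x (RBRM t w z i j),
       forall k : ncpmat,
         x (INV (tnext t) w z (val k)) = x (INV (tprev t) w' z (val k)) + netRM x t w z (val k)
                               + x (RMINV t w z (val k)) - x (INVMC t w z k)
     & forall k : cpmat,
         x (INV (tnext t) w z (val k)) = x (INV (tprev t) w' z (val k)) + netRM x t w z (val k)
                               + x (RMINV t w z (val k)) + x (CPINV t w z k)
                               - x (INVNB t w z k)]).

Definition capacity (x : point) : Prop :=
  [/\ forall (t : 'I_(nT M)) (z : zone M) (w : nd t) (j : proc M),
        \sum_i x (RBRM t w z i j) <= capREC x z (lof M t) j,
      forall (t : 'I_(nT M)) (z : zone M) (w : nd t) (k : cpmat),
        x (CPINV t w z k) <= capCP x z (lof M t) k,
      forall (z : zone M) (l l' : 'I_(nL M)), val l' = (val l).+1 ->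
        (forall j, capREC x z l j <= capREC x z l' j) /\
        (forall k, capCP x z l k <= capCP x z l' k),
      forall z l j (n : 'I_(NREC M l)), x (YREC z l j n) <= uREC M
    & forall z l k (n : 'I_(NCP M l (val k))), x (YCP z l k n) <= uCP M].

Definition feasible (x : point) : Prop :=
  (forall v, 0 <= x v) /\ production x /\ inventory x /\ capacity x.

Definition extreme_point (F : point -> Prop) (x : point) : Prop :=
  F x /\ forall (y1 y2 : point) (lam : R), 0 < lam -> lam < 1 ->
    F y1 -> F y2 -> x = (fun v => lam * y1 v + (1 - lam) * y2 v) -> y1 = y2.

End Vars.

Arguments YREC {R M}.
Arguments YCP {R M}.
Arguments capREC {R M}.
Arguments capCP {R M}.
Arguments feasible {R M}.
Arguments extreme_point {R M}.
Arguments point {R}.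

(* Main.v *)
Require Import Defs.
From HB Require Import structures.
From mathcomp Require Import all_boot all_order all_algebra.
From mathcomp Require Import reals.
From mathcomp Require Import ring lra zify.
From Stdlib Require Import FunctionalExtensionality.
Import Order.TTheory GRing.Theory Num.Theory.
Local Open Scope ring_scope.

Lemma count_lemma (R : realType) (I : finType) (f : I -> R) (u : R) : 0 < u ->
  (forall i, 0 <= f i <= u) ->
  (forall i1 i2, 0 < f i1 < u -> 0 < f i2 < u -> i1 = i2) ->
  Num.ceil ((\sum_i f i) / u) - 1 <= (#|[set i | f i == u]| : int) /\
  (#|I| : int) - Num.ceil ((\sum_i f i) / u) <= (#|[set i | f i == 0]| : int).
Proof.
move=> u0 hb hu.
set A := [set i | f i == u]; set C := [set i | f i == 0].
have hA : \sum_(i in A) f i = (#|A|%:R) * u.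
  rewrite (eq_bigr (fun=> u)) => [|i]; last by rewrite inE => /eqP.
  by rewrite sumr_const mulr_natl.
have hS : \sum_i f i = \sum_(i in A) f i + \sum_(i in ~: A) f i.
  rewrite (bigID (fun i => i \in A)) /=; congr (_ + _); by apply: eq_bigl => i; rewrite in_setC.
have hcard : (#|I| = #|A| + #|~: A|)%N by rewrite cardsC.
have uu : u != 0 by rewrite gt_eqF.
case: (pickP (fun i => (0 < f i) && (f i < u))) => [i0 /andP[h0 h1]| none].
- have h2 : \sum_(i in ~: A) f i = f i0.
    rewrite (bigD1 i0) /=; last by rewrite !inE lt_eqF.
    rewrite big1 ?addr0 //; move=> j /andP[]; rewrite !inE => hj hne.
    have /andP[hj0 hj1] := hb j.
    case: (ltrP 0 (f j)) => hp; last by apply/eqP; rewrite eq_le hj0 hp.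
    have hfu : f j < u by rewrite lt_neqAle hj hj1.
    by move: hne; rewrite (hu j i0) ?eqxx // ?hp ?hfu ?h0 ?h1.
  have hc : Num.ceil ((\sum_i f i) / u) = (#|A| + 1)%:Z.
    apply: ceil_def; rewrite hS hA h2 mulrDl mulfK //.
    have fr : 0 < f i0 / u < 1.
      by rewrite divr_gt0 //= ltr_pdivrMr // mul1r.
    have -> : ((#|A| + 1)%N%:Z - 1)%:~R = #|A|%:R :> R by rewrite PoszD addrK.
    have -> : ((#|A| + 1)%N%:Z)%:~R = #|A|%:R + 1 :> R by exact: (natrD R #|A| 1).
    by case/andP: fr => a b; rewrite ltrDl a lerD2l ltW.
  rewrite hc; split.
    by rewrite PoszD addrK.
  have hsub : ~: A \subset i0 |: C.
    apply/subsetP => j; rewrite !inE => hj.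
    case: (eqVneq j i0) => //= hne.
    have /andP[hj0 hj1] := hb j.
    case: (ltrP 0 (f j)) => hp; last by rewrite eq_le hj0 hp.
    have hfu : f j < u by rewrite lt_neqAle hj hj1.
    by move: hne; rewrite (hu j i0) ?eqxx // ?hp ?hfu ?h0 ?h1.
  have := subset_leq_card hsub; rewrite cardsU1 hcard => hle.
  have : (#|~: A| <= 1 + #|C|)%N by apply: leq_trans hle _; rewrite leq_add2r leq_b1.
  lia.
- have hnone : forall j, f j != u -> f j = 0.
    move=> j hj; have /andP[hj0 hj1] := hb j.
    case: (ltrP 0 (f j)) => hp; last by apply/eqP; rewrite eq_le hj0 hp.
    have hfu : f j < u by rewrite lt_neqAle hj hj1.
    by move: (none j); rewrite hp hfu.
  have hc : Num.ceil ((\sum_i f i) / u) = #|A|%:Z.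
    rewrite hS hA big1 ?addr0 ?mulfK //; first exact: (@intrKceil R #|A|).
    by move=> j hj; apply: hnone; move: hj; rewrite !inE.
  have hsub : ~: A \subset C.
    by apply/subsetP => j; rewrite !inE => /hnone ->.
  have := subset_leq_card hsub; rewrite hcard hc => hle.
  split; lia.
Qed.
Section Pert.
Variables (R : realType) (M : model R).

Definition pertREC (x : point M) (e : R) (z : zone M) (l : 'I_(nL M)) (j : proc M)
  (n1 n2 : nat) : point M := fun v =>
  match v with
  | YREC z' l' j' n' => x v + (if [&& z' == z, l' == l & j' == j] then e else 0) *
       ((nat_of_ord n' == n1)%:R - (nat_of_ord n' == n2)%:R)
  | _ => x v
  end.

Lemma sum_ind (N n : nat) : \sum_(i < N) ((i : nat) == n)%:R = (n < N)%:R :> R.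
Proof.
rewrite -natr_sum; congr (_%:R).
elim: N => [|N IH]; first by rewrite big_ord0.
rewrite big_ord_recr /= IH ltnS; case: (ltngtP n N) => h; rewrite /= ?h; try lia.
Qed.

Lemma pertREC_prod x e z l j n1 n2 : production x -> production (pertREC x e z l j n1 n2).
Proof. by []. Qed.

Lemma pertREC_inv x e z l j n1 n2 : inventory x -> inventory (pertREC x e z l j n1 n2).
Proof. by []. Qed.

Lemma pertREC_cap x e z l j (n1 n2 : 'I_(NREC M l)) z0 l0 j0 :
  capREC (pertREC x e z l j n1 n2) z0 l0 j0 = capREC x z0 l0 j0.
Proof.
rewrite /capREC /= big_split /= -mulr_sumr sumrB.
case: ifP => [/and3P[/eqP e1 /eqP e2 /eqP e3]|_]; last by rewrite mul0r addr0.
subst.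
by rewrite !sum_ind !ltn_ord subrr mulr0 addr0.
Qed.

Lemma pertREC_capCP x e z l j n1 n2 z0 l0 k0 :
  capCP (pertREC x e z l j n1 n2) z0 l0 k0 = capCP x z0 l0 k0.
Proof. by []. Qed.


Lemma pertREC_feas x e z l j (n1 n2 : 'I_(NREC M l)) : feasible x -> n1 != n2 ->
  0 <= x (YREC z l j n1) + e -> x (YREC z l j n1) + e <= uREC M ->
  0 <= x (YREC z l j n2) - e -> x (YREC z l j n2) - e <= uREC M ->
  feasible (pertREC x e z l j n1 n2).
Proof.
case=> hnn [hp [hi hc]] hne a1 b1 a2 b2.
case: hc => c1 c2 c3 c4 c5.
have hne' : (nat_of_ord n1 == nat_of_ord n2) = false by apply/negbTE; exact: hne.
have key : forall z0 l0 j0 (n : 'I_(NREC M l0)),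
    0 <= pertREC x e z l j n1 n2 (YREC z0 l0 j0 n) <= uREC M.
  move=> z0 l0 j0 n /=.
  case: ifP => [/and3P[/eqP e1 /eqP e2 /eqP e3]|_];
    last by rewrite mul0r addr0 hnn c4.
  subst.
  case: (eqVneq n n1) => [->|h1]; first by rewrite eqxx hne' subr0 mulr1 a1 b1.
  have h1' : (nat_of_ord n == nat_of_ord n1) = false by apply/negbTE; exact: h1.
  rewrite h1'.
  case: (eqVneq n n2) => [->|h2]; first by rewrite eqxx sub0r mulrN1 a2 b2.
  have h2' : (nat_of_ord n == nat_of_ord n2) = false by apply/negbTE; exact: h2.
  by rewrite h2' subrr mulr0 addr0 hnn c4.
split; [|split; [exact: pertREC_prod|split; [exact: pertREC_inv|]]].
  have key2 : forall z0 l0 j0 (n : 'I_(NREC M l0)),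
    0 <= pertREC x e z l j n1 n2 (YREC z0 l0 j0 n).
    by move=> z0 l0 j0 n; have /andP[] := key z0 l0 j0 n.
  by case=> *; first [exact: key2 | exact: hnn].
split.
- by move=> t z0 w j0; rewrite pertREC_cap; exact: c1.
- by move=> t z0 w k0; rewrite pertREC_capCP; exact: c2.
- move=> z0 l1 l2 h; have [d1 d2] := c3 z0 l1 l2 h.
  by split => ?; rewrite ?pertREC_cap ?pertREC_capCP.
- by move=> z0 l0 j0 n; have /andP[] := key z0 l0 j0 n.
- by move=> z0 l0 k0 n; exact: c5.
Qed.

Definition pertCP (x : point M) (e : R) (z : zone M) (l : 'I_(nL M)) (k : cpmat M)
  (n1 n2 : nat) : point M := fun v =>
  match v with
  | YCP z' l' k' n' => x v + (if [&& z' == z, l' == l & val k' == val k] then e else 0) *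
       ((nat_of_ord n' == n1)%:R - (nat_of_ord n' == n2)%:R)
  | _ => x v
  end.

Lemma cpmat_inj (k1 k2 : cpmat M) : val k1 = val k2 -> k1 = k2.
Proof.
case: k1 k2 => [a pa] [b pb] /= e; subst; congr exist; exact: bool_irrelevance.
Qed.

Lemma pertCP_prod x e z l k n1 n2 : production x -> production (pertCP x e z l k n1 n2).
Proof. by []. Qed.

Lemma pertCP_inv x e z l k n1 n2 : inventory x -> inventory (pertCP x e z l k n1 n2).
Proof. by []. Qed.

Lemma pertCP_cap x e z l (k : cpmat M) (n1 n2 : 'I_(NCP M l (val k))) z0 l0 k0 :
  capCP (pertCP x e z l k n1 n2) z0 l0 k0 = capCP x z0 l0 k0.
Proof.
rewrite /capCP /= big_split /= -mulr_sumr sumrB.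
case: ifP => [/and3P[/eqP e1 /eqP e2 /eqP e3]|_]; last by rewrite mul0r addr0.
have ek := cpmat_inj _ _ e3; subst.
by rewrite !sum_ind !ltn_ord subrr mulr0 addr0.
Qed.

Lemma pertCP_capREC x e z l k n1 n2 z0 l0 j0 :
  capREC (pertCP x e z l k n1 n2) z0 l0 j0 = capREC x z0 l0 j0.
Proof. by []. Qed.

Lemma pertCP_feas x e z l (k : cpmat M) (n1 n2 : 'I_(NCP M l (val k))) : feasible x -> n1 != n2 ->
  0 <= x (YCP z l k n1) + e -> x (YCP z l k n1) + e <= uCP M ->
  0 <= x (YCP z l k n2) - e -> x (YCP z l k n2) - e <= uCP M ->
  feasible (pertCP x e z l k n1 n2).
Proof.
case=> hnn [hp [hi hc]] hne a1 b1 a2 b2.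
case: hc => c1 c2 c3 c4 c5.
have hne' : (nat_of_ord n1 == nat_of_ord n2) = false by apply/negbTE; exact: hne.
have key : forall z0 l0 k0 (n : 'I_(NCP M l0 (val k0))),
    0 <= pertCP x e z l k n1 n2 (YCP z0 l0 k0 n) <= uCP M.
  move=> z0 l0 k0 n /=.
  case: ifP => [/and3P[/eqP e1 /eqP e2 /eqP e3]|_];
    last by rewrite mul0r addr0 hnn c5.
  have ek := cpmat_inj _ _ e3.
  subst.
  case: (eqVneq n n1) => [->|h1]; first by rewrite eqxx hne' subr0 mulr1 a1 b1.
  have h1' : (nat_of_ord n == nat_of_ord n1) = false by apply/negbTE; exact: h1.
  rewrite h1'.
  case: (eqVneq n n2) => [->|h2]; first by rewrite eqxx sub0r mulrN1 a2 b2.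
  have h2' : (nat_of_ord n == nat_of_ord n2) = false by apply/negbTE; exact: h2.
  by rewrite h2' subrr mulr0 addr0 hnn c5.
split; [|split; [exact: pertCP_prod|split; [exact: pertCP_inv|]]].
  have key2 : forall z0 l0 k0 (n : 'I_(NCP M l0 (val k0))),
    0 <= pertCP x e z l k n1 n2 (YCP z0 l0 k0 n).
    by move=> z0 l0 k0 n; have /andP[] := key z0 l0 k0 n.
  by case=> *; first [exact: key2 | exact: hnn].
split.
- by move=> t z0 w j0; rewrite pertCP_capREC; exact: c1.
- by move=> t z0 w k0; rewrite pertCP_cap; exact: c2.
- move=> z0 l1 l2 h; have [d1 d2] := c3 z0 l1 l2 h.
  by split => ?; rewrite ?pertCP_cap ?pertCP_capREC.
- by move=> z0 l0 j0 n; exact: c4.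
- by move=> z0 l0 k0 n; have /andP[] := key z0 l0 k0 n.
Qed.

End Pert.

Theorem theorem1 (R : realType) (M : model R) (x : point M) :
  0 < uREC M -> 0 < uCP M ->
  extreme_point (@feasible R M) x ->
  (forall (j : proc M) (l : 'I_(nL M)) (z : zone M),
     let Y := capREC x z l j in
     Num.ceil (Y / uREC M) - 1
       <= (#|[set n : 'I_(NREC M l) | x (YREC z l j n) == uREC M]| : int) /\
     (NREC M l : int) - Num.ceil (Y / uREC M)
       <= (#|[set n : 'I_(NREC M l) | x (YREC z l j n) == 0]| : int)) /\
  (forall (k : cpmat M) (l : 'I_(nL M)) (z : zone M),
     let Y := capCP x z l k in
     Num.ceil (Y / uCP M) - 1
       <= (#|[set n : 'I_(NCP M l (val k)) | x (YCP z l k n) == uCP M]| : int) /\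
     (NCP M l (val k) : int) - Num.ceil (Y / uCP M)
       <= (#|[set n : 'I_(NCP M l (val k)) | x (YCP z l k n) == 0]| : int)).
Proof.
move=> uR uC [hF hext].
have h2 : (0 : R) < 2^-1 by rewrite invr_gt0.
have h2' : (2^-1 : R) < 1 by rewrite invf_lt1 // ltr1n.
have [hnn [_ [_ [_ _ _ c4 c5]]]] := hF.
split.
- move=> j l z Y; rewrite /Y /capREC.
  set f := fun n : 'I_(NREC M l) => x (YREC z l j n).
  have hb : forall n, 0 <= f n <= uREC M by move=> n; rewrite hnn c4.
  have hu : forall n1 n2, 0 < f n1 < uREC M -> 0 < f n2 < uREC M -> n1 = n2.
    move=> n1 n2 /andP[p1 q1] /andP[p2 q2]; apply/eqP/negPn/negP => hne.
    rewrite /f in p1 q1 p2 q2.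
    set e := Num.min (Num.min (x (YREC z l j n1)) (uREC M - x (YREC z l j n1))) (Num.min (x (YREC z l j n2)) (uREC M - x (YREC z l j n2))).
    have e0 : 0 < e by rewrite !lt_min p1 p2 !subr_gt0 q1 q2.
    have := lexx e; rewrite {2}/e !le_min => /andP[/andP[e1 e2] /andP[e3 e4]].
    have F1 := @pertREC_feas R M x e z l j n1 n2 hF hne.
    have F2 := @pertREC_feas R M x (- e) z l j n1 n2 hF hne.
    have G1 := F1 ltac:(lra) ltac:(lra) ltac:(lra) ltac:(lra).
    have G2 := F2 ltac:(lra) ltac:(lra) ltac:(lra) ltac:(lra).
    have hne' : (nat_of_ord n1 == nat_of_ord n2) = false by apply/negbTE; exact: hne.
    have := hext _ _ (2^-1) h2 h2' G1 G2.
    have mix : x = (fun v => 2^-1 * pertREC R M x e z l j n1 n2 v +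
                    (1 - 2^-1) * pertREC R M x (- e) z l j n1 n2 v).
      apply: functional_extensionality => v; case: v => * /=;
        try case: ifP => _; by field.
    move=> /(_ mix) /(congr1 (fun y => y (YREC z l j n1))) /=.
    rewrite !eqxx hne' /= subr0 !mulr1.
    lra.
  have := @count_lemma R _ f _ uR hb hu; rewrite card_ord; exact.
- move=> k l z Y; rewrite /Y /capCP.
  set f := fun n : 'I_(NCP M l (val k)) => x (YCP z l k n).
  have hb : forall n, 0 <= f n <= uCP M by move=> n; rewrite hnn c5.
  have hu : forall n1 n2, 0 < f n1 < uCP M -> 0 < f n2 < uCP M -> n1 = n2.
    move=> n1 n2 /andP[p1 q1] /andP[p2 q2]; apply/eqP/negPn/negP => hne.
    rewrite /f in p1 q1 p2 q2.
    set e := Num.min (Num.min (x (YCP z l k n1)) (uCP M - x (YCP z l k n1))) (Num.min (x (YCP z l k n2)) (uCP M - x (YCP z l k n2))).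
    have e0 : 0 < e by rewrite !lt_min p1 p2 !subr_gt0 q1 q2.
    have := lexx e; rewrite {2}/e !le_min => /andP[/andP[e1 e2] /andP[e3 e4]].
    have F1 := @pertCP_feas R M x e z l k n1 n2 hF hne.
    have F2 := @pertCP_feas R M x (- e) z l k n1 n2 hF hne.
    have G1 := F1 ltac:(lra) ltac:(lra) ltac:(lra) ltac:(lra).
    have G2 := F2 ltac:(lra) ltac:(lra) ltac:(lra) ltac:(lra).
    have hne' : (nat_of_ord n1 == nat_of_ord n2) = false by apply/negbTE; exact: hne.
    have := hext _ _ (2^-1) h2 h2' G1 G2.
    have mix : x = (fun v => 2^-1 * pertCP R M x e z l k n1 n2 v +
                    (1 - 2^-1) * pertCP R M x (- e) z l k n1 n2 v).
      apply: functional_extensionality => v; case: v => * /=;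
        try case: ifP => _; by field.
    move=> /(_ mix) /(congr1 (fun y => y (YCP z l k n1))) /=.
    rewrite !eqxx hne' /= subr0 !mulr1.
    lra.
  have := @count_lemma R _ f _ uC hb hu; rewrite card_ord; exact.
Qed.
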